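(* Let $\mathcal Q_0=\mathbb Q\cap(0,1)$ and consider the real vector space of finitely supported real functions on $\mathcal Q_0$ with unit vectors $e_q$, $q\in\mathcal Q_0$. Define linear operators $D_2,D_3$ on it by $D_2e_q=e_{q/2}+e_{(q+1)/2}$ and $D_3e_q=e_{q/3}+e_{(q+1)/3}+e_{(q+2)/3}$. Then for all $l,m\in\mathbb N$ the vector $D_2^lD_3^me_{1/6}$ is a sum of $2^l3^m$ pairwise different unit vectors $e_q$, and the supports of $D_2^lD_3^me_{1/6}$ and $D_2^{l_1}D_3^{m_1}e_{1/6}$ are disjoint whenever $(l,m)\ne(l_1,m_1)$. *)

(* Defs.v *)
From HB Require Import structures.
From mathcomp Require Import all_boot all_order all_algebra.
From mathcomp Require Import reals.
From mathcomp Require Import finmap.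
From mathcomp.multinomials Require Import monalg.
Set Implicit Arguments. Unset Strict Implicit. Unset Printing Implicit Defensive.
Import Order.TTheory GRing.Theory Num.Theory.
Local Open Scope ring_scope.

Definition Q0 : Type := {q : rat | (0 < q) && (q < 1)}.

Lemma Q0_div_proof (k : nat) (n : nat) (q : rat) :
  (0 < q) && (q < 1) -> (k < n)%N ->
  (0 < (q + k%:R) / n%:R) && ((q + k%:R) / n%:R < 1).
Proof.
move=> /andP[q0 q1] kn.
have n0 : (0 : rat) < n%:R by rewrite ltr0n (leq_ltn_trans (leq0n k) kn).
apply/andP; split.
  by rewrite divr_gt0 // ltr_wpDr // ler0n.
rewrite ltr_pdivrMr // mul1r.
have : (k.+1%:R : rat) <= n%:R by rewrite ler_nat.
rewrite -addn1 natrD => H.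
apply: (lt_le_trans _ H); by rewrite addrC ltrD2l.
Qed.

Definition Q0div (n k : nat) (kn : (k < n)%N) (q : Q0) : Q0 :=
  exist _ ((val q + k%:R) / n%:R) (Q0_div_proof (valP q) kn).

Definition half0 := @Q0div 2 0 isT.
Definition half1 := @Q0div 2 1 isT.
Definition third0 := @Q0div 3 0 isT.
Definition third1 := @Q0div 3 1 isT.
Definition third2 := @Q0div 3 2 isT.

Definition sixth : Q0 := exist _ (1 / 6%:R) isT.

Definition V (R : realType) := {malg R[Q0]}.

Definition e (R : realType) (q : Q0) : V R := << q >>.

(* D2, D3: the linear extensions of their values on the unit vectors *)
Definition D2 (R : realType) (v : V R) : V R :=
  \sum_(q <- msupp v) v@_q *: (e R (half0 q) + e R (half1 q)).
Definition D3 (R : realType) (v : V R) : V R :=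
  \sum_(q <- msupp v) v@_q *: (e R (third0 q) + e R (third1 q) + e R (third2 q)).

Definition Dlm (R : realType) (l m : nat) : V R :=
  iter l (@D2 R) (iter m (@D3 R) (e R sixth)).

(* Main.v *)
Require Import Defs.
From HB Require Import structures.
From mathcomp Require Import all_boot all_order all_algebra.
From mathcomp Require Import reals.
From mathcomp Require Import finmap.
From mathcomp.multinomials Require Import monalg.
From mathcomp Require Import zify ring lra.
Import Order.TTheory GRing.Theory Num.Theory.
Local Open Scope ring_scope.

Definition qd (n k : nat) (q : Q0) : Q0 := insubd q ((val q + k%:R) / n%:R).

Lemma qd_val n k q : (k < n)%N -> val (qd n k q) = (val q + k%:R) / n%:R.
Proof. move=> kn; rewrite /qd insubdK //; exact: Q0_div_proof (valP q) kn. Qed.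

Lemma qdE n k (kn : (k < n)%N) q : qd n k q = Q0div kn q.
Proof. by apply: val_inj; rewrite qd_val. Qed.

Lemma Q0_bounds (q : Q0) : 0 < val q /\ val q < 1.
Proof. by case/andP: (valP q). Qed.

Lemma qd_inj n k k' q q' : (k < n)%N -> (k' < n)%N -> qd n k q = qd n k' q' ->
  k = k' /\ q = q'.
Proof.
move=> kn k'n /(congr1 val); rewrite !qd_val //.
have n0 : (n%:R : rat) != 0 by rewrite pnatr_eq0 -lt0n (leq_ltn_trans (leq0n k) kn).
move=> /(congr1 (fun x => x * n%:R)); rewrite !divfK // => E.
have [q0 q1] := Q0_bounds q; have [q0' q1'] := Q0_bounds q'.
have kk : k = k'.
  case: (ltngtP k k') => // [lt|lt].
    have : (k.+1%:R : rat) <= k'%:R by rewrite ler_nat.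
    rewrite -addn1 natrD => H; exfalso; lra.
  have : (k'.+1%:R : rat) <= k%:R by rewrite ler_nat.
  rewrite -addn1 natrD => H; exfalso; lra.
split=> //; subst k'; apply: val_inj; exact: (addIr _ E).
Qed.

Section S.
Variable R : realType.

Lemma big_allp (T1 T2 T3 : Type) (f : T1 -> T2 -> T3) s t (F : T3 -> V R) :
  \sum_(i <- [seq f x y | x <- s, y <- t]) F i = \sum_(x <- s) \sum_(y <- t) F (f x y).
Proof.
elim: s => [|x s IH]; first by rewrite !big_nil.
by rewrite allpairs_cons big_cat big_map IH big_cons.
Qed.

Lemma coef_sum (s : seq Q0) x :
  (\sum_(q <- s) e R q)@_x = (count_mem x s)%:R.
Proof.
elim: s => [|q s IH]; first by rewrite big_nil mcoeff0.
by rewrite big_cons mcoeffD IH /e mcoeffU /= natrD.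
Qed.

Lemma coef_sum_uniq (s : seq Q0) x : uniq s ->
  (\sum_(q <- s) e R q)@_x = (x \in s)%:R.
Proof. by move=> us; rewrite coef_sum count_uniq_mem. Qed.

Lemma msupp_sum (s : seq Q0) : uniq s -> msupp (\sum_(q <- s) e R q) =i s.
Proof.
move=> us x; rewrite -mcoeff_neq0 coef_sum_uniq //.
by case: (x \in s); rewrite ?oner_eq0 ?eqxx.
Qed.

Lemma Dgen (s : seq Q0) (G : Q0 -> V R) : uniq s ->
  \sum_(q <- msupp (\sum_(q <- s) e R q)) (\sum_(q <- s) e R q)@_q *: G q
  = \sum_(q <- s) G q.
Proof.
move=> us.
rewrite (perm_big s); last by apply: uniq_perm => //; [exact: fset_uniq | exact: msupp_sum].
rewrite big_seq [RHS]big_seq; apply: eq_bigr => q qs.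
by rewrite coef_sum_uniq // qs scale1r.
Qed.

Definition step n s := [seq qd n k q | q <- s, k <- iota 0 n].

Lemma D2E s : uniq s -> D2 (\sum_(q <- s) e R q) = \sum_(q <- step 2 s) e R q.
Proof.
move=> us; rewrite /D2 Dgen // big_allp; apply: eq_bigr => q _.
by rewrite /= !big_cons big_nil addr0 /half0 /half1 -!qdE.
Qed.

Lemma D3E s : uniq s -> D3 (\sum_(q <- s) e R q) = \sum_(q <- step 3 s) e R q.
Proof.
move=> us; rewrite /D3 Dgen // big_allp; apply: eq_bigr => q _.
by rewrite /= !big_cons big_nil addr0 addrA /third0 /third1 /third2 -!qdE.
Qed.

End S.

Lemma step_uniq n s : uniq s -> uniq (step n s).
Proof.
move=> us; apply: allpairs_uniq => //; first exact: iota_uniq.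
move=> [q k] [q' k'] /allpairsP[[a b] /= [_ bi [-> ->]]] /allpairsP[[a' b'] /= [_ bi' [-> ->]]] /=.
rewrite !mem_iota /= !add0n in bi bi'.
by move=> /qd_inj => /(_ bi bi') [-> ->].
Qed.

Lemma size_step n s : size (step n s) = (size s * n)%N.
Proof. by rewrite size_allpairs size_iota. Qed.

Definition P (l m : nat) (q : Q0) := exists n : nat,
  (n %% 6 = 1)%N /\ val q * (2 ^ l.+1 * 3 ^ m.+1)%:R = n%:R.

Lemma P_gen N k q A n : (k < N)%N -> (0 < N)%N -> val q * A%:R = n%:R ->
  val (qd N k q) * (N * A)%:R = (n + k * A)%:R.
Proof.
move=> kN N0 H; rewrite qd_val // natrM natrD natrM -H.
have : (N%:R : rat) != 0 by rewrite pnatr_eq0 -lt0n.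
move=> nz; field; exact: nz.
Qed.

Lemma P_step2 l m q k : (k < 2)%N -> P l m q -> P l.+1 m (qd 2 k q).
Proof.
move=> k2 [n [n6 H]]; exists (n + k * (2 ^ l.+1 * 3 ^ m.+1))%N; split.
  rewrite !expnS -mulnA mulnCA mulnA [(3 * _)%N]mulnC -!mulnA mulnCA mulnA.
  set c := (_ * _)%N; lia.
by rewrite -(P_gen _ _ _ _ _ k2 isT H) expnS mulnA.
Qed.

Lemma P_step3 l m q k : (k < 3)%N -> P l m q -> P l m.+1 (qd 3 k q).
Proof.
move=> k3 [n [n6 H]]; exists (n + k * (2 ^ l.+1 * 3 ^ m.+1))%N; split.
  rewrite !expnS -mulnA mulnCA mulnA [(3 * _)%N]mulnC -!mulnA mulnCA mulnA.
  set c := (_ * _)%N; lia.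
by rewrite -(P_gen _ _ _ _ _ k3 isT H) [(3 ^ m.+2)%N]expnS mulnCA.
Qed.

Lemma P_uniq l m l1 m1 q : P l m q -> P l1 m1 q -> l = l1 /\ m = m1.
Proof.
move=> [n [n6 H]] [n1 [n16 H1]].
set A := (2 ^ l.+1 * 3 ^ m.+1)%N in H; set B := (2 ^ l1.+1 * 3 ^ m1.+1)%N in H1.
have E : (n * B = n1 * A)%N.
  clearbody A B; apply/eqP; rewrite -(eqr_nat rat) !natrM -H -H1; apply/eqP; ring.
have n0 : (0 < n)%N by lia.
have n10 : (0 < n1)%N by lia.
have lg p : prime p -> (p %| 6)%N -> forall x, (x %% 6 = 1)%N -> logn p x = 0%N.
  move=> pp p6 x x6; apply: logn_coprime; rewrite prime_coprime //.
  apply/negP => px; have : (p %| 1)%N.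
    by move: px; rewrite (divn_eq x 6) x6 dvdn_addr // dvdn_mull.
  by rewrite dvdn1 => /eqP p1; rewrite p1 in pp.
have hA p : prime p -> (p %| 6)%N -> forall x a b, (x %% 6 = 1)%N ->
   logn p (x * (2 ^ a * 3 ^ b)) = (a * logn p 2 + b * logn p 3)%N.
  move=> pp p6 x a b x6.
  rewrite lognM ?expn_gt0 ?muln_gt0 ?expn_gt0 //; last by lia.
  by rewrite lognM ?expn_gt0 // !lognX lg.
have L2 := congr1 (logn 2) E; have L3 := congr1 (logn 3) E.
rewrite /A /B !(hA 2 isT isT) // in L2.
rewrite !(hA 3 isT isT) // in L3.
move: L2 L3; rewrite !logn_prime //=; lia.
Qed.

Definition S (l m : nat) := iter l (step 2) (iter m (step 3) [:: sixth]).

Lemma S_uniq l m : uniq (S l m).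
Proof.
rewrite /S; elim: l => [|l IH] /=; last exact: step_uniq.
by elim: m => [|m IH] //=; exact: step_uniq.
Qed.

Lemma S_size l m : size (S l m) = (2 ^ l * 3 ^ m)%N.
Proof.
rewrite /S; elim: l => [|l IH] /=.
  rewrite mul1n; elim: m => [|m IH] //=; by rewrite size_step IH expnS; ring.
by rewrite size_step IH expnS; ring.
Qed.

Lemma S_P l m q : q \in S l m -> P l m q.
Proof.
rewrite /S; elim: l q => [|l IH] q /=.
  elim: m q => [|m IH] q /=.
    rewrite inE => /eqP ->; exists 1%N; split => //=.
  move=> /allpairsP[[a b] /= [aS bi ->]].
  have bi' : (b < 3)%N by move: bi; rewrite !inE; case: b => [|[|[|b]]].
  by apply: P_step3 => //; exact: IH.
move=> /allpairsP[[a b] /= [aS bi ->]].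
have bi' : (b < 2)%N by move: bi; rewrite !inE; case: b => [|[|[|b]]].
by apply: P_step2 => //; exact: IH.
Qed.

Lemma DlmE (R : realType) l m : Dlm R l m = \sum_(q <- S l m) e R q.
Proof.
rewrite /Dlm /S; elim: l => [|l IH] /=.
  elim: m => [|m IH] /=; first by rewrite big_cons big_nil addr0.
  rewrite IH D3E //; by have := S_uniq 0 m.
rewrite IH D2E //; by have := S_uniq l m.
Qed.

Theorem lemma3p2 (R : realType) (l m : nat) :
  (exists s : seq Q0,
      [/\ uniq s, size s = (2 ^ l * 3 ^ m)%N & Dlm R l m = \sum_(q <- s) e R q])
  /\ (forall l1 m1 : nat, (l, m) <> (l1, m1) ->
        forall q : Q0, (Dlm R l m)@_q != 0 -> (Dlm R l1 m1)@_q = 0).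
Proof.
split; first by exists (S l m); split; [exact: S_uniq | exact: S_size | exact: DlmE].
move=> l1 m1 ne q.
rewrite !DlmE !coef_sum_uniq ?S_uniq //.
case: (boolP (q \in S l m)) => qS; last by rewrite ?(negbTE qS) ?mulr0n eqxx.
move=> _.
have H1 := S_P _ _ _ qS.
case: (boolP (q \in S l1 m1)) => qS1; last by rewrite ?(negbTE qS1).
have H2 := S_P _ _ _ qS1.
case: (P_uniq _ _ _ _ _ H1 H2) => E1 E2; by rewrite E1 E2 in ne.
Qed.
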